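(* Let $\mathbb{K}$ be a field equipped with a non-Archimedean valuation $|\cdot|$, and assume that the characteristic of $\mathbb{K}$ is not $2$. Let $\mathcal{X}$ be a non-Archimedean linear space over $\mathbb{K}$ with non-Archimedean norm $\|\cdot\|$. Write $|2|$ for the valuation of the element $2=1+1\in\mathbb{K}$ (a positive real number). Then for all $x, y \in \mathcal{X}$, \begin{align*} \Big|\|x\|-\|y\|\Big| &\leq \frac{2}{|2|}\max\{\|x-y\|, \|x+y\|\}-(\|x\|+\|y\|)\\ &\leq \frac{2}{|2|}\max\{\|x\|, \|y\|\}-(\|x\|+\|y\|) \end{align*} and \begin{align*} \Big|\|x\|-\|y\|\Big| \leq \|x\|+\|y\|-\frac{2}{|2|}\Big|\|x+y\|-\|x-y\|\Big|. \end{align*} In particular, if $|2|=1$, then for all $x,y\in\mathcal{X}$, \begin{align*} \Big|\|x\|-\|y\|\Big| &\leq 2\max\{\|x-y\|, \|x+y\|\}-(\|x\|+\|y\|)\leq 2\max\{\|x\|, \|y\|\}-(\|x\|+\|y\|) \end{align*} and \begin{align*} \Big|\|x\|-\|y\|\Big| \leq \|x\|+\|y\|-2\Big|\|x+y\|-\|x-y\|\Big|. \end{align*}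
   Context: A non-Archimedean valuation on a field $\mathbb{K}$ is a map $|\cdot|:\mathbb{K}\to[0,\infty)$ such that: (i) $|\lambda|=0$ implies $\lambda=0$; (ii) $|\lambda\mu|=|\lambda||\mu|$ for all $\lambda,\mu\in\mathbb{K}$; (iii) $|\lambda+\mu|\le\max\{|\lambda|,|\mu|\}$ for all $\lambda,\mu\in\mathbb{K}$. A non-Archimedean linear space over such a field $\mathbb{K}$ is a vector space $\mathcal{X}$ over $\mathbb{K}$ with a map $\|\cdot\|:\mathcal{X}\to[0,\infty)$ such that: (i) $\|x\|=0$ implies $x=0$; (ii) $\|\lambda x\|=|\lambda|\|x\|$ for all $\lambda\in\mathbb{K}$, $x\in\mathcal{X}$; (iii) $\|x+y\|\le\max\{\|x\|,\|y\|\}$ for all $x,y\in\mathcal{X}$. In the statement, the numerator $2$ in $\frac{2}{|2|}$ is the real number $2$, and the outer absolute values $|\cdot|$ applied to differences of norms are ordinary real absolute values. *)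

(* Defs.v *)
From HB Require Import structures.
From mathcomp Require Import all_boot all_order all_algebra.
From mathcomp Require Import reals.
Set Implicit Arguments. Unset Strict Implicit. Unset Printing Implicit Defensive.
Import Order.TTheory GRing.Theory Num.Theory.
Local Open Scope ring_scope.

Definition nonarch_valuation (K : fieldType) (R : realType) (v : K -> R) : Prop :=
  [/\ forall a, 0 <= v a,
      forall a, v a = 0 -> a = 0,
      forall a b, v (a * b) = v a * v b
    & forall a b, v (a + b) <= Num.max (v a) (v b)].

Definition nonarch_norm (K : fieldType) (R : realType) (v : K -> R)
    (X : lmodType K) (N : X -> R) : Prop :=
  [/\ forall x, 0 <= N x,
      forall x, N x = 0 -> x = 0,
      forall (a : K) (x : X), N (a *: x) = v a * N x
    & forall x y, N (x + y) <= Num.max (N x) (N y)].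

(* Main.v *)
Require Import Defs.
From HB Require Import structures.
From mathcomp Require Import all_boot all_order all_algebra.
From mathcomp Require Import reals.
From mathcomp Require Import lra.
Import Order.TTheory GRing.Theory Num.Theory.
Local Open Scope ring_scope.

Lemma part1 (R : realType) (K : fieldType) (v : K -> R)
    (X : lmodType K) (N : X -> R)
    (hv : nonarch_valuation v) (hchar : (2%:R : K) != 0)
    (hN : nonarch_norm v N) :
  (forall x y : X,
     `|N x - N y| <= 2 / v 2%:R * Num.max (N (x - y)) (N (x + y)) - (N x + N y)
     /\ 2 / v 2%:R * Num.max (N (x - y)) (N (x + y)) - (N x + N y)
        <= 2 / v 2%:R * Num.max (N x) (N y) - (N x + N y)
     /\ `|N x - N y| <= N x + N y - 2 / v 2%:R * `|N (x + y) - N (x - y)|).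
Proof.
case: hv => v0 vz vM vD; case: hN => N0 Nz NZ ND.
have v1 : v 1 = 1.
  have h1 : v 1 = v 1 * v 1 by rewrite -vM mulr1.
  have hn : v 1 != 0 by apply/eqP => /vz/eqP; rewrite oner_eq0.
  by apply: (mulfI hn); rewrite mulr1 -h1.
have vN1 : v (-1) = 1.
  have h : v (-1) * v (-1) = 1 by rewrite -vM mulrNN mulr1.
  have := v0 (-1); nra.
have NN : forall x, N (- x) = N x.
  by move=> x; rewrite -scaleN1r NZ vN1 mul1r.
set c := v 2%:R.
have cpos : 0 < c.
  rewrite lt_def v0 andbT; apply/eqP => /vz/eqP; exact/negP.
have N2 : forall x, N (x + x) = c * N x.
  by move=> x; rewrite -NZ scaler_nat mulr2n.
have Nle : forall a b, N (a + b) <= Num.max (N a) (N b) by [].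
move=> x y.
set A := N (x + y); set B := N (x - y).
set d := c^-1.
have dpos : 0 < d by rewrite invr_gt0.
have cd : d * c = 1 by rewrite mulVf // gt_eqF.
have hM : forall z, c * N z <= Num.max B A -> N z <= d * Num.max B A.
  move=> z h; rewrite -[N z]mul1r -cd -mulrA.
  by rewrite ler_pM2l.
have hx : N x <= d * Num.max B A.
  apply: hM; rewrite -N2.
  have -> : x + x = (x - y) + (x + y) by rewrite addrCA subrK.
  exact: Nle.
have hy : N y <= d * Num.max B A.
  apply: hM; rewrite -N2.
  have -> : y + y = - (x - y) + (x + y) by rewrite opprB addrA subrK.
  by rewrite /B -(NN (x - y)); exact: Nle.
have Mle : Num.max B A <= Num.max (N x) (N y).
  rewrite ge_max; apply/andP; split; last exact: Nle.
  by rewrite -(NN y); exact: Nle.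
have M0 : 0 <= Num.max B A by rewrite le_max N0.
have e2 : 2 / c = 2 * d by [].
split; last split.
- rewrite ler_norml; apply/andP; split; lra.
- rewrite lerD2r -!mulrA; apply: ler_wpM2l => //.
  by rewrite ler_pM2l.
have B0 : 0 <= B by exact: N0.
have A0 : 0 <= A by exact: N0.
have key : forall z, (A <= Num.max (c * N z) B) -> (B <= Num.max (c * N z) A) ->
    `|A - B| <= c * N z.
  move=> z h1 h2; have hz : 0 <= c * N z by apply: mulr_ge0; [exact: ltW|].
  move: h1 h2 hz; set w := c * N z.
  rewrite !le_max => /orP[h1|h1] /orP[h2|h2] hz;
  rewrite ler_norml; apply/andP; split; lra.
have kx : `|A - B| <= c * N x.
  apply: key.
  - rewrite /A /B -N2 -(NN (x - y)).
    have -> : x + y = (x + x) + - (x - y) by rewrite opprB addrCA addrK addrC.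
    exact: Nle.
  - rewrite /A /B -N2 -(NN (x + y)).
    have -> : x - y = (x + x) + - (x + y) by rewrite opprD addrA addrK.
    exact: Nle.
have ky : `|A - B| <= c * N y.
  apply: key.
  - rewrite /A /B -N2.
    have -> : x + y = (y + y) + (x - y) by rewrite addrCA addrK.
    exact: Nle.
  - rewrite /A /B -N2 -(NN (y + y)) maxC.
    have -> : x - y = (x + y) + - (y + y) by rewrite opprD addrA addrK.
    exact: Nle.
have dkx : d * `|A - B| <= N x.
  by rewrite -[N x]mul1r -cd -mulrA; rewrite ler_pM2l.
have dky : d * `|A - B| <= N y.
  by rewrite -[N y]mul1r -cd -mulrA; rewrite ler_pM2l.
rewrite -mulrA ler_norml; apply/andP; split; lra.
Qed.

Theorem theorem2p1 (R : realType) (K : fieldType) (v : K -> R)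
    (X : lmodType K) (N : X -> R)
    (hv : nonarch_valuation v) (hchar : (2%:R : K) != 0)
    (hN : nonarch_norm v N) :
  (forall x y : X,
     `|N x - N y| <= 2 / v 2%:R * Num.max (N (x - y)) (N (x + y)) - (N x + N y)
     /\ 2 / v 2%:R * Num.max (N (x - y)) (N (x + y)) - (N x + N y)
        <= 2 / v 2%:R * Num.max (N x) (N y) - (N x + N y)
     /\ `|N x - N y| <= N x + N y - 2 / v 2%:R * `|N (x + y) - N (x - y)|)
  /\
  (v 2%:R = 1 ->
   forall x y : X,
     `|N x - N y| <= 2 * Num.max (N (x - y)) (N (x + y)) - (N x + N y)
     /\ 2 * Num.max (N (x - y)) (N (x + y)) - (N x + N y)
        <= 2 * Num.max (N x) (N y) - (N x + N y)
     /\ `|N x - N y| <= N x + N y - 2 * `|N (x + y) - N (x - y)|).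
Proof.
have P := @part1 R K v X N hv hchar hN.
split => //.
move=> h1 x y; have := P x y; by rewrite h1 divr1.
Qed.
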